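(* Let $K\subset\mathbb{R}$ be a real biquadratic bicyclic number field with quadratic subfields $k_1,k_2,k_3$, let $\varepsilon_i>1$ be the fundamental unit of $k_i$ and $\lambda_i=N_{k_i/\mathbb{Q}}(\varepsilon_i)$. Let $\eta=\mathrm{sgn}(\eta)\,\varepsilon_1^{m_1}\varepsilon_2^{m_2}\varepsilon_3^{m_3}\in\mathcal{O}_{k_1}^\times\mathcal{O}_{k_2}^\times\mathcal{O}_{k_3}^\times$ with $m_1,m_2,m_3\in\mathbb{Z}$. Then $\eta\in\mathcal{O}_K^*$ if and only if $\lambda_1^{m_1}=\lambda_2^{m_2}=\lambda_3^{m_3}$.
   Context: $\mathcal{O}_k^\times$ denotes the unit group of the ring of integers of a number field $k$. For real $K$, $\mathcal{O}_K^*$ is defined as the set of $\eta\in\mathcal{O}_{k_1}^\times\mathcal{O}_{k_2}^\times\mathcal{O}_{k_3}^\times$ that are totally positive or totally negative (i.e. all conjugates of $\eta$ have the same sign). $\mathrm{sgn}(x)$ is the sign of $x$. *)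

(* Defs.v *)
From HB Require Import structures.
From mathcomp Require Import all_boot all_order all_algebra all_field.
Set Implicit Arguments. Unset Strict Implicit. Unset Printing Implicit Defensive.
Import Order.TTheory GRing.Theory Num.Theory.
Local Open Scope ring_scope.

(* All number fields are taken inside algC (algebraic complex numbers). *)

Definition sqfree (n : nat) : Prop := forall p : nat, prime p -> ~~ (p * p %| n)%N.

Definition qfield (d : nat) (x : algC) : Prop :=
  exists p q : rat, x = ratr p + ratr q * sqrtC d%:R.

Definition qint (d : nat) (x : algC) : Prop := qfield d x /\ x \in Aint.

Definition qunit (d : nat) (x : algC) : Prop :=
  qint d x /\ x != 0 /\ qint d x^-1.

Definition fund_unit (d : nat) (eps : algC) : Prop :=
  qunit d eps /\ 1 < eps /\
  forall u, qunit d u -> exists n : int, u = eps ^ n \/ u = - eps ^ n.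

(* third quadratic subfield of Q(sqrt d1, sqrt d2) *)
Definition d3_of (d1 d2 : nat) : nat := (d1 * d2 %/ (gcdn d1 d2 ^ 2))%N.

Definition in_unit_prod (d1 d2 d3 : nat) (x : algC) : Prop :=
  exists u1 u2 u3, [/\ qunit d1 u1, qunit d2 u2, qunit d3 u3 & x = u1 * u2 * u3].

(* conjugates of x over Q: roots of its minimal polynomial over Q *)
Definition totally_pos_or_neg (x : algC) : Prop :=
  (forall z, root (minCpoly x) z -> 0 < z) \/
  (forall z, root (minCpoly x) z -> z < 0).

Definition in_OKstar (d1 d2 d3 : nat) (x : algC) : Prop :=
  in_unit_prod d1 d2 d3 x /\ totally_pos_or_neg x.

(* Main.v *)
Require Import Defs.
From HB Require Import structures.
From mathcomp Require Import all_boot all_order all_algebra all_field.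
From mathcomp Require Import ring.
Import Order.TTheory GRing.Theory Num.Theory.
Local Open Scope ring_scope.

Ltac rpush := rewrite ?(rmorphD, rmorphB, rmorphM, rmorphN, rmorphXn, rmorph1, rmorph0, rmorph_nat) /=.

Definition irr (a : algC) := forall r : rat, a != ratr r.

Lemma ratr_inj' (x y : rat) : ratr x = ratr y :> algC -> x = y.
Proof. exact: fmorph_inj. Qed.

Lemma ratr_eq0' (x : rat) : (ratr x == 0 :> algC) = (x == 0).
Proof. by rewrite fmorph_eq0. Qed.

Lemma indep1 (a : algC) (ha : irr a) (A B : rat) :
  ratr A + ratr B * a = 0 -> A = 0 /\ B = 0.
Proof.
move=> h; have [B0|nB0] := eqVneq B 0.
  split=> //; move: h; rewrite B0 rmorph0 mul0r addr0 => /eqP.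
  by rewrite ratr_eq0' => /eqP.
exfalso; move/eqP: (ha (- A / B)); apply.
have nB0' : ratr B != 0 :> algC by rewrite ratr_eq0'.
rewrite fmorph_div rmorphN /=.
apply: (mulIf nB0'); rewrite divfK //.
by apply/eqP; rewrite -addr_eq0 addrC mulrC h.
Qed.

Arguments indep1 {a} ha {A B}.

Lemma eq_by {x y z : algC} : z = 0 -> x - y = z -> x = y.
Proof. by move=> -> /eqP; rewrite subr_eq0 => /eqP. Qed.


Lemma indep2 {a b : algC} {a2 b2 : rat} (ha2 : a ^+ 2 = ratr a2) (hb2 : b ^+ 2 = ratr b2)
  (ha : irr a) (hb : irr b) (hab : irr (a * b)) {A B C D : rat} :
  ratr A + ratr B * a + ratr C * b + ratr D * (a * b) = 0 ->
  [/\ A = 0, B = 0, C = 0 & D = 0].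
Proof.
move=> h.
have [v0|nv0] := eqVneq (ratr C + ratr D * a) 0.
  have [C0 D0] := indep1 ha v0; subst C D.
  move: h; rewrite !rmorph0 !mul0r !addr0 => /(indep1 ha) [-> ->]; done.
exfalso.
have nv1 : ratr C - ratr D * a != 0.
  apply/eqP => e.
  have [C0 D0] : C = 0 /\ - D = 0 by apply: (indep1 ha); rewrite rmorphN mulNr.
  have D0' : D = 0 by rewrite -[D]opprK D0 oppr0.
  by move: nv0; rewrite C0 D0' rmorph0 mul0r addr0 eqxx.
pose N := C ^+ 2 - D ^+ 2 * a2.
have hN : (ratr C + ratr D * a) * (ratr C - ratr D * a) = ratr N.
  rewrite /N; rpush; rewrite -ha2; ring.
have nN : ratr N != 0 :> algC by rewrite -hN mulf_neq0.
pose E := - (A * C - B * D * a2) / N.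
pose F := - (B * C - A * D) / N.
have key : (ratr A + ratr B * a + ratr C * b + ratr D * (a * b)) * (ratr C - ratr D * a) = 0.
  by rewrite h mul0r.
have hbE : b = ratr E + ratr F * a.
  apply: (mulIf nN); rewrite /E /F !fmorph_div mulrDl -mulrA divfK // mulrAC divfK //.
  rewrite -{1}hN; apply: (eq_by key); rpush; rewrite -ha2; ring.
have e2 : ratr (E ^+ 2 + F ^+ 2 * a2 - b2) + ratr (2 * E * F) * a = 0.
  have -> : ratr (E ^+ 2 + F ^+ 2 * a2 - b2) + ratr (2 * E * F) * a
           = (ratr E + ratr F * a) ^+ 2 - b ^+ 2 :> algC.
    by rpush; rewrite -ha2 -hb2; ring.
  by rewrite -hbE subrr.
have [_ /eqP] := indep1 ha e2.
rewrite -mulrA mulf_eq0 pnatr_eq0 /= mulf_eq0 => /orP[] /eqP E0.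
  have := hab (F * a2); rewrite hbE E0 rmorph0 add0r; rpush; rewrite -ha2.
  by rewrite mulrCA -expr2 mulrC eqxx.
by have := hb E; rewrite hbE E0 rmorph0 mul0r addr0 eqxx.
Qed.

Definition cv (a b : algC) (A B C D : rat) :=
  ratr A + ratr B * a + ratr C * b + ratr D * (a * b).

Definition crel (a b a' b' x y : algC) := exists A B C D : rat,
  x = cv a b A B C D /\ y = cv a' b' A B C D.

Lemma crel_rat a b a' b' r : crel a b a' b' (ratr r) (ratr r).
Proof. by exists r, 0, 0, 0; rewrite /cv !rmorph0 !mul0r !addr0. Qed.

Lemma crel_add a b a' b' x y x1 y1 :
  crel a b a' b' x y -> crel a b a' b' x1 y1 -> crel a b a' b' (x + x1) (y + y1).
Proof.
move=> [A [B [C [D [-> ->]]]]] [A1 [B1 [C1 [D1 [-> ->]]]]].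
exists (A + A1), (B + B1), (C + C1), (D + D1); rewrite /cv; split; rpush; ring.
Qed.

Lemma crel_mul {a b a' b' : algC} {a2 b2 : rat} (ha2 : a ^+ 2 = ratr a2) (hb2 : b ^+ 2 = ratr b2)
  (ha2' : a' ^+ 2 = ratr a2) (hb2' : b' ^+ 2 = ratr b2) {x y x1 y1} :
  crel a b a' b' x y -> crel a b a' b' x1 y1 -> crel a b a' b' (x * x1) (y * y1).
Proof.
move=> [A [B [C [D [-> ->]]]]] [A1 [B1 [C1 [D1 [-> ->]]]]].
exists (A * A1 + B * B1 * a2 + C * C1 * b2 + D * D1 * a2 * b2),
  (A * B1 + B * A1 + (C * D1 + D * C1) * b2),
  (A * C1 + C * A1 + (B * D1 + D * B1) * a2),
  (A * D1 + D * A1 + B * C1 + C * B1); rewrite /cv; split; rpush.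
  by rewrite -ha2 -hb2; ring.
by rewrite -ha2' -hb2'; ring.
Qed.

Lemma crel_poly {a b a' b' : algC} {a2 b2 : rat} (ha2 : a ^+ 2 = ratr a2) (hb2 : b ^+ 2 = ratr b2)
  (ha2' : a' ^+ 2 = ratr a2) (hb2' : b' ^+ 2 = ratr b2) x y (q : {poly rat}) :
  crel a b a' b' x y -> crel a b a' b' (map_poly ratr q).[x] (map_poly ratr q).[y].
Proof.
move=> hxy; elim/poly_ind: q => [|q c IH].
  by rewrite rmorph0 !horner0; have := crel_rat a b a' b' 0; rewrite rmorph0.
rewrite rmorphD rmorphM /= map_polyX map_polyC !hornerE.
apply: crel_add; last exact: crel_rat.
exact: (crel_mul ha2 hb2 ha2' hb2' IH hxy).
Qed.

Lemma crel_exp {a b a' b' : algC} {a2 b2 : rat} (ha2 : a ^+ 2 = ratr a2) (hb2 : b ^+ 2 = ratr b2)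
  (ha2' : a' ^+ 2 = ratr a2) (hb2' : b' ^+ 2 = ratr b2) {x y} (n : nat) :
  crel a b a' b' x y -> crel a b a' b' (x ^+ n) (y ^+ n).
Proof.
move=> hxy; elim: n => [|n IH].
  by rewrite !expr0; have := crel_rat a b a' b' 1; rewrite rmorph1.
by rewrite !exprS; exact: (crel_mul ha2 hb2 ha2' hb2' hxy IH).
Qed.

Lemma crel_expz {a b a' b' : algC} {a2 b2 : rat} (ha2 : a ^+ 2 = ratr a2) (hb2 : b ^+ 2 = ratr b2)
  (ha2' : a' ^+ 2 = ratr a2) (hb2' : b' ^+ 2 = ratr b2) {x y} (m : int) :
  crel a b a' b' x y -> crel a b a' b' x^-1 y^-1 -> crel a b a' b' (x ^ m) (y ^ m).
Proof.
move=> hxy hxyi; case: m => n.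
  exact: (crel_exp ha2 hb2 ha2' hb2').
change (crel a b a' b' ((x ^+ n.+1)^-1) ((y ^+ n.+1)^-1)); rewrite -!exprVn.
exact: (crel_exp ha2 hb2 ha2' hb2').
Qed.

Lemma cv_sub a b A B C D A1 B1 C1 D1 :
  cv a b A B C D - cv a b A1 B1 C1 D1 = cv a b (A - A1) (B - B1) (C - C1) (D - D1).
Proof. by rewrite /cv; rpush; ring. Qed.

Lemma crel_coords {a b a' b' : algC} {a2 b2 : rat} (ha2 : a ^+ 2 = ratr a2) (hb2 : b ^+ 2 = ratr b2)
  (ha : irr a) (hb : irr b) (hab : irr (a * b)) {x y} A B C D :
  crel a b a' b' x y -> x = cv a b A B C D -> y = cv a' b' A B C D.
Proof.
move=> [A1 [B1 [C1 [D1 [e1 ->]]]]] e2.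
have := subrr x; rewrite {1}e2 e1 cv_sub.
move=> /(indep2 ha2 hb2 ha hb hab) [/eqP] + /eqP + /eqP + /eqP.
by rewrite !subr_eq0 => /eqP -> /eqP -> /eqP -> /eqP ->.
Qed.

Lemma crel_root {a b a' b' : algC} {a2 b2 : rat} (ha2 : a ^+ 2 = ratr a2) (hb2 : b ^+ 2 = ratr b2)
  (ha2' : a' ^+ 2 = ratr a2) (hb2' : b' ^+ 2 = ratr b2)
  (ha : irr a) (hb : irr b) (hab : irr (a * b)) {x y} (p : {poly rat}) :
  crel a b a' b' x y -> root (map_poly ratr p) x -> root (map_poly ratr p) y.
Proof.
move=> hxy; have [A [B [C [D [e1 e2]]]]] := crel_poly ha2 hb2 ha2' hb2' _ _ p hxy.
rewrite /root e1 e2 => /eqP /(indep2 ha2 hb2 ha hb hab) [-> -> -> ->].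
by rewrite /cv !rmorph0 !mul0r !addr0.
Qed.

Definition sg (t : bool) : algC := if t then -1 else 1.

Lemma sg_sq t : sg t ^+ 2 = 1.
Proof. by case: t; rewrite /sg ?sqrrN expr1n. Qed.

Lemma minCpoly_roots {a b : algC} {a2 b2 : rat} (ha2 : a ^+ 2 = ratr a2) (hb2 : b ^+ 2 = ratr b2)
  A B C D z :
  root (minCpoly (cv a b A B C D)) z ->
  exists t1 t2 : bool, z = cv (sg t1 * a) (sg t2 * b) A B C D.
Proof.
pose Y : {poly rat} := 'X - A%:P.
pose R := Y ^+ 2 + (B ^+ 2 * a2 - C ^+ 2 * b2 - D ^+ 2 * a2 * b2)%:P.
pose S := (2 * B)%:P * Y + (2 * C * D * b2)%:P.
pose Q := R ^+ 2 - a2%:P * S ^+ 2.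
have hQ0 (w : algC) : (map_poly ratr Q).[w] =
   ((w - ratr A) ^+ 2 + ratr B ^+ 2 * ratr a2 - ratr C ^+ 2 * ratr b2
     - ratr D ^+ 2 * ratr a2 * ratr b2) ^+ 2
   - ratr a2 * (2 * ratr B * (w - ratr A) + 2 * ratr C * ratr D * ratr b2) ^+ 2.
  rewrite /Q /R /S /Y !(rmorphB, rmorphD, rmorphM, rmorphXn) /= map_polyX !map_polyC.
  rewrite !(hornerD, hornerN, hornerM, hornerX, hornerC, horner_exp); ring.
have hQ (w : algC) : (map_poly ratr Q).[w] =
   (w - cv a b A B C D) * (w - cv a (- b) A B C D) *
   (w - cv (- a) b A B C D) * (w - cv (- a) (- b) A B C D).
  by rewrite hQ0 -ha2 -hb2 /cv; ring.
have [p [Dp _] dvp] := minCpolyP (cv a b A B C D).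
have pQ : (p %| Q)%R by rewrite -dvp /root hQ subrr !mul0r.
have pQC : (map_poly ratr p %| map_poly (ratr : rat -> algC) Q)%R by rewrite dvdp_map.
rewrite Dp => /(root_dvdp pQC).
rewrite /root hQ !mulf_eq0 !subr_eq0 => /orP[/orP[/orP[]|]|] /eqP ->.
- by exists false, false; rewrite /sg !mul1r.
- by exists false, true; rewrite /sg !mul1r mulN1r.
- by exists true, false; rewrite /sg !mul1r mulN1r.
- by exists true, true; rewrite /sg !mulN1r.
Qed.


Lemma sqrt_sq (d : nat) : sqrtC (d%:R : algC) ^+ 2 = ratr (d%:R).
Proof. by rewrite sqrtCK rmorph_nat. Qed.

Lemma irr_fund (d : nat) e p q :
  fund_unit d e -> e = ratr p + ratr q * sqrtC d%:R -> irr (sqrtC d%:R).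
Proof.
move=> [[[_ Ae] [ne0 [_ Aei]]] [gt1 _]] he r; apply/eqP => hr.
have Ce : e \in Crat by rewrite he hr; apply/CratP; exists (p + q * r); rpush.
have Cei : e^-1 \in Crat by rewrite rpredV.
have Zei := Cint_rat_Aint Cei Aei.
have e0 : 0 < e by apply: lt_trans gt1.
have ei0 : 0 < e^-1 by rewrite invr_gt0.
have ei1 : e^-1 < 1 by rewrite invf_lt1.
move: Zei; rewrite intrEge0 ?ltW // => /natrP [n hn].
by move: ei0 ei1; rewrite hn ltr0n ltrn1; clear hn; case: n.
Qed.

Lemma quad_inv (d : nat) e p q :
  fund_unit d e -> e = ratr p + ratr q * sqrtC d%:R -> irr (sqrtC d%:R) ->
  exists p' q', e^-1 = ratr p' + ratr q' * sqrtC d%:R /\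
     (ratr p - ratr q * sqrtC d%:R) * (ratr p' - ratr q' * sqrtC d%:R) = 1 :> algC.
Proof.
move=> [[_ [ne0 [[p' [q' hi]] _]]] _] he hs; exists p', q'; split => //.
set s := sqrtC (d%:R : algC).
have hs2 : s ^+ 2 = d%:R by rewrite sqrtCK.
have h1 : e * e^-1 = 1 by rewrite mulfV.
have : ratr (p * p' + q * q' * d%:R - 1) + ratr (p * q' + q * p') * s = 0.
  apply: (eq_by (z := e * e^-1 - 1)); first by rewrite h1 subrr.
  rewrite (_ : e / e = e * (ratr p' + ratr q' * s)); last by congr (_ * _); exact: hi.
  rewrite {1}he -/s; rpush; rewrite -hs2; ring.
move=> /(indep1 hs) [h0 h0'].
apply: (eq_by (z := ratr (p * p' + q * q' * d%:R - 1) - ratr (p * q' + q * p') * s)).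
  by rewrite h0 h0' !rmorph0 mul0r subr0.
rpush; rewrite -hs2; ring.
Qed.

Lemma quad_lambda (d : nat) e p q :
  fund_unit d e -> e = ratr p + ratr q * sqrtC d%:R -> irr (sqrtC d%:R) ->
  (forall p q : rat, root (minCpoly (ratr p + ratr q * sqrtC (d%:R : algC)))
                          (ratr p - ratr q * sqrtC d%:R)) ->
  p ^+ 2 - d%:R * q ^+ 2 = 1 \/ p ^+ 2 - d%:R * q ^+ 2 = -1.
Proof.
move=> hf he hs hc.
have [p' [q' [hi hprod]]] := quad_inv _ _ _ _ hf he hs.
case: hf => [[[_ Ae] [ne0 [_ Aei]]] _].
set s := sqrtC (d%:R : algC) in he hi hprod hc.
have hs2 : s ^+ 2 = d%:R by rewrite sqrtCK.
have Ae' : (ratr p - ratr q * s) \in Aint.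
  apply: (root_monic_Aint (hc p q)); first exact: minCpoly_monic.
  by move: Ae; rewrite he.
have Aei' : (ratr p' - ratr q' * s) \in Aint.
  apply: (root_monic_Aint (hc p' q')); first exact: minCpoly_monic.
  by move: Aei; rewrite hi.
have L1 : e * (ratr p - ratr q * s) = ratr (p ^+ 2 - d%:R * q ^+ 2).
  by rewrite he; rpush; rewrite -hs2; ring.
have L2 : e^-1 * (ratr p' - ratr q' * s) = ratr (p' ^+ 2 - d%:R * q' ^+ 2).
  by rewrite hi; rpush; rewrite -hs2; ring.
have Z1 : (ratr (p ^+ 2 - d%:R * q ^+ 2) : algC) \in Num.int.
  by apply: (Cint_rat_Aint (Crat_rat _)); rewrite -L1 rpredM.
have Z2 : (ratr (p' ^+ 2 - d%:R * q' ^+ 2) : algC) \in Num.int.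
  by apply: (Cint_rat_Aint (Crat_rat _)); rewrite -L2 rpredM.
have prod : ratr (p ^+ 2 - d%:R * q ^+ 2) * ratr (p' ^+ 2 - d%:R * q' ^+ 2) = 1 :> algC.
  by rewrite -L1 -L2 mulrACA mulfV // hprod mulr1.
have /intrP [z hz] := Z1; have /intrP [w hw] := Z2.
move: prod; rewrite hz hw -intrM => hzw; have : (z * w)%:~R = (1 : int)%:~R :> algC by rewrite hzw.
move/intr_inj; rewrite mulrC => /intUnitRing.unitzPl; rewrite qualifE => /orP [] /eqP hz1.
  left; apply: (fmorph_inj (ratr : rat -> algC)); apply: (etrans hz); rewrite hz1; exact: (esym (rmorph1 _)).
by right; apply: (fmorph_inj (ratr : rat -> algC)); apply: (etrans hz); rewrite hz1 !rmorphN1.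
Qed.


Lemma crel_minC {a b a' b' : algC} {a2 b2 : rat} (ha2 : a ^+ 2 = ratr a2) (hb2 : b ^+ 2 = ratr b2)
  (ha2' : a' ^+ 2 = ratr a2) (hb2' : b' ^+ 2 = ratr b2)
  (ha : irr a) (hb : irr b) (hab : irr (a * b)) {x y} :
  crel a b a' b' x y -> root (minCpoly x) y.
Proof.
move=> hxy; have [p [Dp _] dvp] := minCpolyP x.
rewrite Dp; apply: (crel_root ha2 hb2 ha2' hb2' ha hb hab p hxy).
by rewrite -Dp root_minCpoly.
Qed.

Lemma sgM_sq (t : bool) {a : algC} {a2 : rat} : a ^+ 2 = ratr a2 -> (sg t * a) ^+ 2 = ratr a2.
Proof. by move=> h; rewrite exprMn sg_sq mul1r h. Qed.

Definition img (t : bool) (x x' : algC) := if t then x' else x.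

Lemma crel1 a b t1 t2 p q :
  crel a b (sg t1 * a) (sg t2 * b) (ratr p + ratr q * a)
    (img t1 (ratr p + ratr q * a) (ratr p - ratr q * a)).
Proof.
exists p, q, 0, 0; rewrite /cv /img /sg !rmorph0 !mul0r !addr0.
by case: t1; split => //; ring.
Qed.

Lemma crel2 a b t1 t2 p q :
  crel a b (sg t1 * a) (sg t2 * b) (ratr p + ratr q * b)
    (img t2 (ratr p + ratr q * b) (ratr p - ratr q * b)).
Proof.
exists p, 0, q, 0; rewrite /cv /img /sg !rmorph0 !mul0r !addr0.
by case: t2; split => //; ring.
Qed.

Lemma crel3 a b c (g : nat) t1 t2 p q : g != 0%N -> a * b = g%:R * c ->
  crel a b (sg t1 * a) (sg t2 * b) (ratr p + ratr q * c)
    (img (t1 != t2) (ratr p + ratr q * c) (ratr p - ratr q * c)).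
Proof.
move=> g0 hab; exists p, 0, 0, (q / g%:R).
have g0' : (g%:R : algC) != 0 by rewrite pnatr_eq0.
have e : ratr (q / g%:R) * (a * b) = ratr q * c.
  by rewrite hab fmorph_div rmorph_nat mulrA divfK.
have e' : (sg t1 * a) * (sg t2 * b) = sg t1 * sg t2 * (a * b) by ring.
rewrite /cv e' !rmorph0 !mul0r !addr0; split; first by rewrite e.
rewrite mulrCA e /img /sg; clear e'; case: t1; case: t2 => /=; ring.
Qed.

Lemma qfield_mul d x y : qfield d x -> qfield d y -> qfield d (x * y).
Proof.
move=> [p [q ->]] [p' [q' ->]].
exists (p * p' + q * q' * d%:R), (p * q' + q * p').
have hs : sqrtC (d%:R : algC) ^+ 2 = d%:R by rewrite sqrtCK.
rpush; set s := sqrtC (d%:R : algC) in hs *; rewrite -hs; ring.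
Qed.

Lemma qint_mul d x y : qint d x -> qint d y -> qint d (x * y).
Proof. by move=> [fx ax] [fy ay]; split; [apply: qfield_mul | rewrite rpredM]. Qed.

Lemma qunit_mul d x y : qunit d x -> qunit d y -> qunit d (x * y).
Proof.
move=> [ix [nx ix']] [iy [ny iy']]; split; first exact: qint_mul.
by split; [rewrite mulf_neq0 | rewrite invfM; apply: qint_mul].
Qed.

Lemma qunit_inv d x : qunit d x -> qunit d x^-1.
Proof. by move=> [ix [nx ix']]; split => //; split; [rewrite invr_eq0 | rewrite invrK]. Qed.

Lemma qint_rat d (r : rat) : (ratr r : algC) \in Num.int -> qint d (ratr r).
Proof.
move=> h; split; last exact: Aint_Cint.
by exists r, 0; rewrite rmorph0 mul0r addr0.
Qed.

Lemma qunit_sign d (s : bool) : qunit d ((-1) ^+ s).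
Proof.
have h1 : qunit d 1.
  split; first by have := qint_rat d 1; rewrite rmorph1; apply; rewrite rpred1.
  by split; [rewrite oner_eq0 | rewrite invr1; have := qint_rat d 1; rewrite rmorph1; apply; rewrite rpred1].
case: s => //.
have hN : qint d (-1).
  by have := qint_rat d (-1); rewrite rmorphN1; apply; rewrite rpredN1.
by split => //; split; [rewrite oppr_eq0 oner_eq0 | rewrite invrN1].
Qed.

Lemma qunit_exp d x n : qunit d x -> qunit d (x ^+ n).
Proof.
move=> hx; elim: n => [|n IH]; first by rewrite expr0; exact: (qunit_sign d false).
by rewrite exprS; apply: qunit_mul.
Qed.

Lemma qunit_expz d x (m : int) : qunit d x -> qunit d (x ^ m).
Proof.
move=> hx; case: m => n; first exact: qunit_exp.
by apply: qunit_inv; apply: qunit_exp.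
Qed.

Lemma conj_rel (d : nat) e p q : e = ratr p + ratr q * sqrtC d%:R -> e != 0 ->
  ratr p - ratr q * sqrtC (d%:R : algC) = ratr (p ^+ 2 - d%:R * q ^+ 2) * e^-1.
Proof.
move=> he ne; apply: (mulfI ne); rewrite mulrCA mulfV // mulr1 {1}he.
have hs : sqrtC (d%:R : algC) ^+ 2 = d%:R by rewrite sqrtCK.
rpush; set s := sqrtC (d%:R : algC) in hs *; rewrite -hs; ring.
Qed.

Lemma factor_img (t : bool) (l : rat) (e : algC) (m : int) : e != 0 ->
  (img t e (ratr l * e^-1)) ^ m =
  ratr (if t then l ^ m else 1) * e ^ m * (if t then ((e ^ m)^-1) ^+ 2 else 1).
Proof.
move=> ne; rewrite /img; case: t; last by rewrite rmorph1 mul1r mulr1.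
have nem : e ^ m != 0 by rewrite expfz_neq0.
rewrite expfzMl -expfV fmorphXz; field; exact: nem.
Qed.

Lemma F_gt0 (t : bool) (E : algC) : 0 < E -> 0 < (if t then (E^-1) ^+ 2 else 1).
Proof. by move=> h; case: t => //; rewrite exprn_gt0 // invr_gt0. Qed.

Lemma crel_fac {a b a' b' : algC} {a2 b2 : rat} (ha2 : a ^+ 2 = ratr a2) (hb2 : b ^+ 2 = ratr b2)
  (ha2' : a' ^+ 2 = ratr a2) (hb2' : b' ^+ 2 = ratr b2) (e e' ei ei' : algC) (t : bool) (m : int) :
  crel a b a' b' e (img t e e') -> crel a b a' b' ei (img t ei ei') ->
  e^-1 = ei -> e'^-1 = ei' -> crel a b a' b' (e ^ m) ((img t e e') ^ m).
Proof.
move=> h1 h2 h3 h4; apply: (crel_expz ha2 hb2 ha2' hb2') => //.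
rewrite h3 (_ : (img t e e')^-1 = img t ei ei') //.
by rewrite /img -h3 -h4; case: (t).
Qed.

Lemma sq_pm1 (l : rat) (m : int) : l = 1 \/ l = -1 -> (l ^ m) ^+ 2 = 1.
Proof.
case => ->; first by rewrite exp1rz expr1n.
change (((-1) ^ m) ^ (2%:Z) = 1 :> rat).
by rewrite exprz_exp mulrC -exprz_exp (_ : (-1) ^ 2%:Z = 1 :> rat) ?exp1rz // sqrrN expr1n.
Qed.

Lemma eq_of_sq (x y : rat) : x ^+ 2 = 1 -> y ^+ 2 = 1 -> 0 < x * y -> x = y.
Proof.
move=> hx hy hp.
have : (x * y) ^+ 2 == 1 by rewrite exprMn hx hy mulr1.
rewrite sqrf_eq1 => /orP [] /eqP h.
  by rewrite -[x]mulr1 -hy expr2 mulrA h mul1r.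
by move: hp; rewrite h ltr0N1.
Qed.


Theorem mainTheorem2 (d1 d2 : nat)
  (hd1 : (1 < d1)%N) (hd2 : (1 < d2)%N) (sq1 : sqfree d1) (sq2 : sqfree d2)
  (hneq : d1 <> d2)
  (e1 e2 e3 : algC)
  (he1 : fund_unit d1 e1) (he2 : fund_unit d2 e2) (he3 : fund_unit (d3_of d1 d2) e3)
  (p1 q1 p2 q2 p3 q3 : rat)
  (hr1 : e1 = ratr p1 + ratr q1 * sqrtC d1%:R)
  (hr2 : e2 = ratr p2 + ratr q2 * sqrtC d2%:R)
  (hr3 : e3 = ratr p3 + ratr q3 * sqrtC (d3_of d1 d2)%:R)
  (s : bool) (m1 m2 m3 : int) :
  let lam1 := p1 ^+ 2 - d1%:R * q1 ^+ 2 in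
  let lam2 := p2 ^+ 2 - d2%:R * q2 ^+ 2 in
  let lam3 := p3 ^+ 2 - (d3_of d1 d2)%:R * q3 ^+ 2 in
  let eta := (-1) ^+ s * (e1 ^ m1 * e2 ^ m2 * e3 ^ m3) in
  in_OKstar d1 d2 (d3_of d1 d2) eta <->
  (lam1 ^ m1 = lam2 ^ m2 /\ lam2 ^ m2 = lam3 ^ m3).
Proof.
move=> lam1 lam2 lam3 eta.
set d3 := d3_of d1 d2 in he3 hr3 lam3 *.
pose g := gcdn d1 d2.
have g0 : g != 0%N by rewrite -lt0n gcdn_gt0 (ltnW hd1).
have hd : (d1 * d2 = g ^ 2 * d3)%N.
  by rewrite /d3 /d3_of [RHS]mulnC divnK // expnS expn1 dvdn_mul // ?dvdn_gcdl ?dvdn_gcdr.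
have ha2 : sqrtC (d1%:R : algC) ^+ 2 = ratr (d1%:R) := sqrt_sq d1.
have hb2 : sqrtC (d2%:R : algC) ^+ 2 = ratr (d2%:R) := sqrt_sq d2.
have hab : sqrtC (d1%:R : algC) * sqrtC (d2%:R) = g%:R * sqrtC (d3%:R).
  rewrite -sqrtCM ?nnegrE ?ler0n // -natrM hd natrM natrX sqrtCM ?nnegrE ?exprn_ge0 ?ler0n //.
  by rewrite sqrCK ?ler0n.
have ia := irr_fund _ _ _ _ he1 hr1.
have ib := irr_fund _ _ _ _ he2 hr2.
have ic := irr_fund _ _ _ _ he3 hr3.
have g0' : (g%:R : algC) != 0 by rewrite pnatr_eq0.
have iab : irr (sqrtC (d1%:R : algC) * sqrtC (d2%:R)).
  move=> r; apply/eqP => h; move/eqP: (ic (r / g%:R)); apply.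
  have -> : (ratr (r / g%:R) : algC) = ratr r / g%:R by rewrite fmorph_div rmorph_nat.
  by rewrite -h hab mulrC mulKf.
set a := sqrtC (d1%:R : algC) in ha2 hab ia iab hr1 *.
set b := sqrtC (d2%:R : algC) in hb2 hab ib iab hr2 *.
set c := sqrtC (d3%:R : algC) in hab ic hr3 *.
have hc1 p q : root (minCpoly (ratr p + ratr q * a)) (ratr p - ratr q * a).
  exact: (crel_minC ha2 hb2 (sgM_sq true ha2) (sgM_sq false hb2) ia ib iab (crel1 a b true false p q)).
have hc2 p q : root (minCpoly (ratr p + ratr q * b)) (ratr p - ratr q * b).
  exact: (crel_minC ha2 hb2 (sgM_sq false ha2) (sgM_sq true hb2) ia ib iab (crel2 a b false true p q)).
have hc3 p q : root (minCpoly (ratr p + ratr q * c)) (ratr p - ratr q * c).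
  exact: (crel_minC ha2 hb2 (sgM_sq false ha2) (sgM_sq true hb2) ia ib iab (crel3 a b c g false true p q g0 hab)).
have hl1 : lam1 = 1 \/ lam1 = -1 := quad_lambda _ _ _ _ he1 hr1 ia hc1.
have hl2 : lam2 = 1 \/ lam2 = -1 := quad_lambda _ _ _ _ he2 hr2 ib hc2.
have hl3 : lam3 = 1 \/ lam3 = -1 := quad_lambda _ _ _ _ he3 hr3 ic hc3.
have [p1' [q1' [hi1 hp1]]] := quad_inv _ _ _ _ he1 hr1 ia.
have [p2' [q2' [hi2 hp2]]] := quad_inv _ _ _ _ he2 hr2 ib.
have [p3' [q3' [hi3 hp3]]] := quad_inv _ _ _ _ he3 hr3 ic.
rewrite -/a in hi1 hp1; rewrite -/b in hi2 hp2; rewrite -/c in hi3 hp3.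
have [[_ [n1 _]] [g1 _]] := he1.
have [[_ [n2 _]] [g2 _]] := he2.
have [[_ [n3 _]] [g3 _]] := he3.
have e1p : 0 < e1 := lt_trans ltr01 g1.
have e2p : 0 < e2 := lt_trans ltr01 g2.
have e3p : 0 < e3 := lt_trans ltr01 g3.
set e1' := ratr p1 - ratr q1 * a.
set e2' := ratr p2 - ratr q2 * b.
set e3' := ratr p3 - ratr q3 * c.
have hce1 : e1' = ratr lam1 * e1^-1 := conj_rel d1 e1 p1 q1 hr1 n1.
have hce2 : e2' = ratr lam2 * e2^-1 := conj_rel d2 e2 p2 q2 hr2 n2.
have hce3 : e3' = ratr lam3 * e3^-1 := conj_rel d3 e3 p3 q3 hr3 n3.
have inv_of (x y : algC) : x * y = 1 -> x^-1 = y.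
  move=> hxy; have nx : x != 0 by apply: contra_eq_neq hxy => ->; rewrite mul0r eq_sym oner_eq0.
  by rewrite -[x^-1]mulr1 -hxy mulrA mulVf // mul1r.
have hie1 := inv_of _ _ hp1.
have hie2 := inv_of _ _ hp2.
have hie3 := inv_of _ _ hp3.
pose et t1 t2 := (-1) ^+ s * ((img t1 e1 e1') ^ m1 * (img t2 e2 e2') ^ m2 * (img (t1 != t2) e3 e3') ^ m3).
have key t1 t2 : crel a b (sg t1 * a) (sg t2 * b) eta (et t1 t2).
  have hA := sgM_sq t1 ha2; have hB := sgM_sq t2 hb2.
  rewrite /eta /et; apply: (crel_mul ha2 hb2 hA hB).
    by have := crel_rat a b (sg t1 * a) (sg t2 * b) ((-1) ^+ s); rewrite rmorph_sign.
  apply: (crel_mul ha2 hb2 hA hB); first apply: (crel_mul ha2 hb2 hA hB).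
  - rewrite hr1 in hi1 *; apply: (crel_fac ha2 hb2 hA hB _ _ _ _ _ _ _ _ hi1 hie1).
      exact: crel1.
    exact: crel1.
  - rewrite hr2 in hi2 *; apply: (crel_fac ha2 hb2 hA hB _ _ _ _ _ _ _ _ hi2 hie2).
      exact: crel2.
    exact: crel2.
  - rewrite hr3 in hi3 *; apply: (crel_fac ha2 hb2 hA hB _ _ _ _ _ _ _ _ hi3 hie3).
      exact: (crel3 a b c g t1 t2 p3 q3 g0 hab).
    exact: (crel3 a b c g t1 t2 p3' q3' g0 hab).
have hroot t1 t2 : root (minCpoly eta) (et t1 t2).
  exact: (crel_minC ha2 hb2 (sgM_sq t1 ha2) (sgM_sq t2 hb2) ia ib iab (key t1 t2)).
have hroots z : root (minCpoly eta) z -> exists t1 t2, z = et t1 t2.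
  have [A [B [C [D [hx _]]]]] := key false false.
  rewrite hx => /(minCpoly_roots ha2 hb2) [t1 [t2 ->]]; exists t1, t2.
  by rewrite (crel_coords ha2 hb2 ia ib iab A B C D (key t1 t2) hx).
pose sig t1 t2 := (if t1 then lam1 ^ m1 else 1) * (if t2 then lam2 ^ m2 else 1) *
                  (if t1 != t2 then lam3 ^ m3 else 1).
pose F t1 t2 := (if t1 then ((e1 ^ m1)^-1) ^+ 2 else 1) * (if t2 then ((e2 ^ m2)^-1) ^+ 2 else 1) *
                (if t1 != t2 then ((e3 ^ m3)^-1) ^+ 2 else 1).
have hF t1 t2 : 0 < F t1 t2.
  by rewrite /F !mulr_gt0 // F_gt0 // exprz_gt0.
have het t1 t2 : et t1 t2 = ratr (sig t1 t2) * eta * F t1 t2.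
  rewrite /et hce1 hce2 hce3 !factor_img // /eta /sig /F; rpush; ring.
have hm1 := sq_pm1 lam1 m1 hl1.
have hm2 := sq_pm1 lam2 m2 hl2.
have hm3 := sq_pm1 lam3 m3 hl3.
split.
  move=> [_ tp].
  have pos t1 t2 : 0 < sig t1 t2.
    have hr := root_minCpoly eta; have hz := hroot t1 t2; rewrite het -mulrA in hz.
    rewrite -(ltr0q algC); case: tp => H.
      have h1 := H _ hr; have h2 := H _ hz.
      by move: h2; rewrite pmulr_lgt0 // mulr_gt0.
    have h1 := H _ hr; have h2 := H _ hz.
    by move: h2; rewrite nmulr_llt0 // pmulr_llt0.
  have e23 : lam2 ^ m2 = lam3 ^ m3.
    by apply: eq_of_sq => //; have := pos false true; rewrite /sig /= mul1r.
  have e13 : lam1 ^ m1 = lam3 ^ m3.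
    by apply: eq_of_sq => //; have := pos true false; rewrite /sig /= mulr1.
  by split => //; rewrite e13 e23.
move=> [h12 h23].
split.
  exists ((-1) ^+ s * e1 ^ m1), (e2 ^ m2), (e3 ^ m3); split.
  - by apply: qunit_mul; [apply: qunit_sign | apply: qunit_expz; case: he1].
  - by apply: qunit_expz; case: he2.
  - by apply: qunit_expz; case: he3.
  by rewrite /eta !mulrA.
have hsig t1 t2 : sig t1 t2 = 1.
  rewrite /sig; case: t1; case: t2 => /=; rewrite ?mul1r ?mulr1 //.
  - by rewrite h12 -expr2.
  - by rewrite h12 h23 -expr2.
  - by rewrite h23 -expr2.
have hE : 0 < e1 ^ m1 * e2 ^ m2 * e3 ^ m3 by rewrite !mulr_gt0 // exprz_gt0.
have hz z : root (minCpoly eta) z -> exists t1 t2, z = eta * F t1 t2.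
  by move/hroots => [t1 [t2 ->]]; exists t1, t2; rewrite het hsig rmorph1 mul1r.
have [hp|hn] : 0 < eta \/ eta < 0.
  rewrite /eta; case: (s).
    by right; rewrite expr1 mulN1r oppr_lt0.
  by left; rewrite expr0 mul1r.
  by left => z /hz [t1 [t2 ->]]; rewrite mulr_gt0.
by right => z /hz [t1 [t2 ->]]; rewrite pmulr_llt0.
Qed.
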